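(* Let $\mathbb{X},\mathbb{Y}$ be finite-dimensional real polyhedral Banach spaces and let $T\in\mathbb{L}(\mathbb{X},\mathbb{Y})$ be bijective. Then the following are equivalent: (a) $T$ preserves parallel pairs; (b) $T$ preserves TEA pairs; (c) for each $f\in\mathrm{Ext}\,B_{\mathbb{X}^*}$ there exists a unique $g\in\mathrm{Ext}\,B_{\mathbb{Y}^*}$ such that $T(\mathrm{Sm}(f))\subset\mathrm{Sm}(g)$.
   Context: A finite-dimensional Banach space is polyhedral if its unit ball has finitely many extreme points. $\mathrm{Ext}\,B_{\mathbb{X}^*}$ is the set of extreme points of the dual unit ball. For non-zero $x$, $J(x)=\{f\in S_{\mathbb{X}^*}: f(x)=\|x\|\}$. For $f\in\mathrm{Ext}\,B_{\mathbb{X}^*}$, $\mathrm{Sm}(f)=\{x\in\mathbb{X}: J(x)=\{f\}\}$. $(x,y)$ is a parallel pair if $\|x+\lambda y\|=\|x\|+\|y\|$ for some $\lambda$ with $|\lambda|=1$; a TEA pair if $\|x+y\|=\|x\|+\|y\|$. $T$ preserves parallel (resp. TEA) pairs if $(x,y)$ parallel (resp. TEA) in $\mathbb{X}$ implies $(Tx,Ty)$ parallel (resp. TEA) in $\mathbb{Y}$. *)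

(* Defs.v *)
From HB Require Import structures.
From mathcomp Require Import all_boot all_order all_algebra.
From mathcomp Require Import all_classical all_reals.
Set Implicit Arguments. Unset Strict Implicit. Unset Printing Implicit Defensive.
Import Order.TTheory GRing.Theory Num.Theory.
Local Open Scope ring_scope.
Local Open Scope classical_set_scope.

(* A finite-dimensional real normed space of dimension n is modelled as
   'rV[R]_n equipped with an arbitrary norm N. *)
Definition is_norm (R : realType) (n : nat) (N : 'rV[R]_n -> R) : Prop :=
  [/\ forall x, N x = 0 -> x = 0,
      forall (a : R) x, N (a *: x) = `|a| * N x
    & forall x y, N (x + y) <= N x + N y].

(* Linear functionals on 'rV_n are represented by column vectors. *)
Definition fapp (R : realType) (n : nat) (f : 'cV[R]_n) (x : 'rV[R]_n) : R :=
  (x *m f) 0 0.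

Definition dualnorm (R : realType) (n : nat) (N : 'rV[R]_n -> R) (f : 'cV[R]_n) : R :=
  sup [set `|fapp f x| | x in [set x | N x <= 1]].

Definition unit_ball (R : realType) (n : nat) (N : 'rV[R]_n -> R) : set 'rV[R]_n :=
  [set x | N x <= 1].

Definition dual_unit_ball (R : realType) (n : nat) (N : 'rV[R]_n -> R) : set 'cV[R]_n :=
  [set f | dualnorm N f <= 1].

Definition extreme (R : realType) (V : lmodType R) (C : set V) : set V :=
  [set v | C v /\ forall (a b : V) (t : R), C a -> C b -> 0 < t < 1 ->
             v = t *: a + (1 - t) *: b -> a = v /\ b = v].

Definition polyhedral (R : realType) (n : nat) (N : 'rV[R]_n -> R) : Prop :=
  finite_set (extreme (unit_ball N)).

Definition Jset (R : realType) (n : nat) (N : 'rV[R]_n -> R) (x : 'rV[R]_n) : set 'cV[R]_n :=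
  [set f | dualnorm N f = 1 /\ fapp f x = N x].

Definition Sm (R : realType) (n : nat) (N : 'rV[R]_n -> R) (f : 'cV[R]_n) : set 'rV[R]_n :=
  [set x | x != 0 /\ Jset N x = [set f]].

Definition parallel_pair (R : realType) (n : nat) (N : 'rV[R]_n -> R) (x y : 'rV[R]_n) : Prop :=
  exists l : R, `|l| = 1 /\ N (x + l *: y) = N x + N y.

Definition tea_pair (R : realType) (n : nat) (N : 'rV[R]_n -> R) (x y : 'rV[R]_n) : Prop :=
  N (x + y) = N x + N y.

(* Main.v *)
Require Import Defs.
From HB Require Import structures.
From mathcomp Require Import all_boot all_order all_algebra.
From mathcomp Require Import all_classical all_reals.
From mathcomp Require Import ring lra zify.
Import Order.TTheory GRing.Theory Num.Theory.
Local Open Scope ring_scope.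
Local Open Scope classical_set_scope.

Set Implicit Arguments. Unset Strict Implicit. Unset Printing Implicit Defensive.

Section Fapp.
Variables (R : realType) (n : nat).
Implicit Types (f g : 'cV[R]_n) (x y : 'rV[R]_n).

Lemma fappD f x y : fapp f (x + y) = fapp f x + fapp f y.
Proof. by rewrite /fapp mulmxDl mxE. Qed.
Lemma fappZ f a x : fapp f (a *: x) = a * fapp f x.
Proof. by rewrite /fapp -scalemxAl mxE. Qed.
Lemma fappN f x : fapp f (- x) = - fapp f x.
Proof. by rewrite /fapp mulNmx mxE. Qed.
Lemma fappB f x y : fapp f (x - y) = fapp f x - fapp f y.
Proof. by rewrite fappD fappN. Qed.
Lemma fapp0 f : fapp f 0 = 0.
Proof. by rewrite /fapp mul0mx mxE. Qed.
Lemma fappDf f g x : fapp (f + g) x = fapp f x + fapp g x.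
Proof. by rewrite /fapp mulmxDr mxE. Qed.
Lemma fappZf a f x : fapp (a *: f) x = a * fapp f x.
Proof. by rewrite /fapp -scalemxAr mxE. Qed.
Lemma fappNf f x : fapp (- f) x = - fapp f x.
Proof. by rewrite /fapp mulmxN mxE. Qed.
Lemma fappBf f g x : fapp (f - g) x = fapp f x - fapp g x.
Proof. by rewrite fappDf fappNf. Qed.
Lemma fapp0f x : fapp 0 x = 0.
Proof. by rewrite /fapp mulmx0 mxE. Qed.
Lemma fapp_sum (I : Type) (s : seq I) (F : I -> 'rV[R]_n) f :
  fapp f (\sum_(i <- s) F i) = \sum_(i <- s) fapp f (F i).
Proof.
elim: s => [|a s IH]; first by rewrite !big_nil fapp0.
by rewrite !big_cons fappD IH.
Qed.
Lemma fapp_sumf (I : Type) (s : seq I) (F : I -> 'cV[R]_n) x :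
  fapp (\sum_(i <- s) F i) x = \sum_(i <- s) fapp (F i) x.
Proof.
elim: s => [|a s IH]; first by rewrite !big_nil fapp0f.
by rewrite !big_cons fappDf IH.
Qed.
Lemma fapp_delta f i : fapp f (delta_mx 0 i) = f i 0.
Proof. by rewrite /fapp -rowE mxE. Qed.
Lemma fapp_inj f g : (forall x, fapp f x = fapp g x) -> f = g.
Proof.
move=> H; apply/matrixP => i j; rewrite (ord1 j) -!fapp_delta; exact: H.
Qed.
End Fapp.

Section Norm.
Variables (R : realType) (n : nat) (N : 'rV[R]_n -> R) (hN : is_norm N).
Implicit Types (x y : 'rV[R]_n).

Lemma NZ a x : N (a *: x) = `|a| * N x. Proof. by case: hN. Qed.
Lemma ND x y : N (x + y) <= N x + N y. Proof. by case: hN. Qed.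
Lemma N_eq0 x : N x = 0 -> x = 0. Proof. by case: hN => h _ _; exact: h. Qed.
Lemma N0 : N 0 = 0.
Proof. by rewrite -(scale0r (0 : 'rV[R]_n)) NZ normr0 mul0r. Qed.
Lemma NN x : N (- x) = N x.
Proof. by rewrite -scaleN1r NZ normrN normr1 mul1r. Qed.
Lemma Nge0 x : 0 <= N x.
Proof.
have := ND x (- x); rewrite subrr N0 NN => h.
by rewrite -(@pmulr_rge0 _ 2) // mulr2n mulrDl !mul1r.
Qed.
Lemma Ngt0 x : x != 0 -> 0 < N x.
Proof.
move=> hx; rewrite lt_def Nge0 andbT; apply/eqP => h; move/eqP: hx; apply.
exact: N_eq0.
Qed.
Lemma NB x y : N x - N y <= N (x - y).
Proof.
have := ND (x - y) y; rewrite subrK => h; by rewrite lerBlDr.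
Qed.
Lemma NBs x y : N (x - y) <= N x + N y.
Proof. by rewrite -(NN y) ND. Qed.
Lemma Ndist x y : `|N x - N y| <= N (x - y).
Proof.
rewrite ler_norml NB andbT lerNl opprB.
by have := NB y x; rewrite -(NN (y - x)) opprB.
Qed.
Lemma N_sum (I : Type) (s : seq I) (F : I -> 'rV[R]_n) :
  N (\sum_(i <- s) F i) <= \sum_(i <- s) N (F i).
Proof.
elim: s => [|a s IH]; first by rewrite !big_nil N0.
rewrite !big_cons; apply: le_trans (ND _ _) _; exact: lerD.
Qed.
End Norm.

Section HahnBanach.
Variables (R : realType) (n : nat) (N : 'rV[R]_n -> R) (hN : is_norm N).
Implicit Types (x y u v : 'rV[R]_n).

Definition subsp (M : set 'rV[R]_n) :=
  M 0 /\ forall a x y, M x -> M y -> M (a *: x + y).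
Definition linon (M : set 'rV[R]_n) (f : 'rV[R]_n -> R) :=
  forall a x y, M x -> M y -> f (a *: x + y) = a * f x + f y.
Definition domon (M : set 'rV[R]_n) (f : 'rV[R]_n -> R) :=
  forall x, M x -> f x <= N x.

Lemma linon0 M f : subsp M -> linon M f -> f 0 = 0.
Proof.
move=> [M0 _] hf; have := hf 1 0 0 M0 M0; rewrite scale1r addr0 mul1r.
by move=> h; apply: (addrI (f 0)); rewrite addr0 -h.
Qed.

Lemma linonZ M f a x : subsp M -> linon M f -> M x -> f (a *: x) = a * f x.
Proof.
move=> hM hf Mx; have := hf a x 0 Mx hM.1; rewrite !addr0 => ->.
by rewrite (linon0 hM hf) addr0.
Qed.

Lemma linonD M f x y : subsp M -> linon M f -> M x -> M y -> f (x + y) = f x + f y.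
Proof. by move=> hM hf Mx My; have := hf 1 x y Mx My; rewrite scale1r mul1r. Qed.

Lemma subspZ M a x : subsp M -> M x -> M (a *: x).
Proof. by move=> [M0 hM] Mx; have := hM a x 0 Mx M0; rewrite addr0. Qed.
Lemma subspD M x y : subsp M -> M x -> M y -> M (x + y).
Proof. by move=> [M0 hM] Mx My; have := hM 1 x y Mx My; rewrite scale1r. Qed.

Lemma hb_c M f v : subsp M -> linon M f -> domon M f ->
  exists c, (forall u, M u -> f u - N (u - v) <= c) /\
            (forall u, M u -> c <= N (u + v) - f u).
Proof.
move=> hM hf hd.
pose A := [set f u - N (u - v) | u in M].
have key : forall u u', M u -> M u' -> f u - N (u - v) <= N (u' + v) - f u'.
  move=> u u' Mu Mu'; rewrite lerBrDr addrAC lerBlDr.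
  rewrite -(linonD hM hf Mu Mu').
  apply: le_trans (hd _ (subspD hM Mu Mu')) _.
  have -> : u + u' = (u - v) + (u' + v) by rewrite addrACA addNr addr0.
  by rewrite addrC; exact: ND hN _ _.
have A0 : A !=set0 by exists (f 0 - N (0 - v)); exists 0 => //; exact: hM.1.
have Aub : has_sup A.
  split => //; exists (N (0 + v) - f 0) => _ [u Mu <-]; exact: key _ _ Mu hM.1.
exists (sup A); split.
  move=> u Mu; apply: sup_upper_bound => //; by exists u.
move=> u Mu; apply: ge_sup => // _ [w Mw <-]; exact: key.
Qed.

Lemma hb_step M f v c : subsp M -> linon M f -> domon M f -> ~ M v ->
  (forall u, M u -> f u - N (u - v) <= c) ->
  (forall u, M u -> c <= N (u + v) - f u) ->
  exists M' f', [/\ subsp M', M `<=` M', M' v, linon M' f' & domon M' f'] /\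
     ((forall x, M x -> f' x = f x) /\ f' v = c).
Proof.
move=> hM hf hd Mv hc1 hc2.
pose M' := [set w | exists p : 'rV[R]_n * R, M p.1 /\ w = p.1 + p.2 *: v].
pose f' w := let p := xget (0, 0) [set p : 'rV[R]_n * R | M p.1 /\ w = p.1 + p.2 *: v] in
   f p.1 + p.2 * c.
have uniq : forall u s u' s', M u -> M u' -> u + s *: v = u' + s' *: v -> u = u' /\ s = s'.
  move=> u s u' s' Mu Mu' e.
  have ss : s = s'.
    apply/eqP; apply/negPn/negP => hs; apply: Mv.
    have : (s - s') *: v = u' - u.
      by rewrite scalerBl -[s *: v](addKr u) e addrA addrK addrC.
    move=> e2.
    have -> : v = (s - s')^-1 *: (u' - u).
      by rewrite -e2 scalerA mulVf ?scale1r // subr_eq0.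
    apply: subspZ => //; rewrite addrC -scaleN1r; exact: hM.2.
  split => //; move: e; rewrite ss; exact: addIr.
have f'E : forall u s, M u -> f' (u + s *: v) = f u + s * c.
  move=> u s Mu; rewrite /f'.
  set P := [set p : 'rV[R]_n * R | _].
  have Pex : P (u, s) by split.
  have := xgetPex (0, 0) (ex_intro _ _ Pex); case: (xget _ P) => u' s' [/= Mu' e].
  by have [-> ->] := uniq _ _ _ _ Mu Mu' e.
exists M', f'; split; first split.
- split; first by exists (0, 0); rewrite /= scale0r addr0; split => //; exact: hM.1.
  move=> a x y [[u1 s1] [/= Mu1 ->]] [[u2 s2] [/= Mu2 ->]].
  exists (a *: u1 + u2, a * s1 + s2); split => /=; first exact: hM.2.
  by rewrite scalerDr scalerDl scalerA addrACA.
- move=> x Mx; exists (x, 0); split => //; by rewrite scale0r addr0.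
- by exists (0, 1); rewrite /= scale1r add0r; split => //; exact: hM.1.
- move=> a x y [[u1 s1] [/= Mu1 ->]] [[u2 s2] [/= Mu2 ->]].
  have -> : a *: (u1 + s1 *: v) + (u2 + s2 *: v) = (a *: u1 + u2) + (a * s1 + s2) *: v.
    by rewrite scalerDr scalerDl scalerA addrACA.
  rewrite !f'E // ?hf //; first by rewrite mulrDl mulrDr mulrA addrACA.
  exact: hM.2.
- move=> _ [[u s] [/= Mu ->]]; rewrite f'E //.
  have [s0|s0|->] := ltgtP s 0; last by rewrite mul0r scale0r !addr0; exact: hd.
  +
    have r0 : 0 < - s by rewrite oppr_gt0.
    have := hc1 ((- s)^-1 *: u) (subspZ _ hM Mu).
    rewrite (linonZ _ hM hf Mu) => h.
    have h2 := ler_wpM2l (ltW r0) h.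
    rewrite mulrBr mulrA mulfV ?gt_eqF // mul1r in h2.
    have e : (- s) * N ((- s)^-1 *: u - v) = N (u + s *: v).
      rewrite -[X in X * _]gtr0_norm // -(NZ hN) scalerBr scalerA mulfV ?gt_eqF //.
      by rewrite scale1r scaleNr opprK.
    rewrite e in h2; rewrite mulNr in h2.
    lra.
  + have := hc2 (s^-1 *: u) (subspZ _ hM Mu).
    rewrite (linonZ _ hM hf Mu) => h.
    have h2 := ler_wpM2l (ltW s0) h.
    rewrite mulrBr mulrA mulfV ?gt_eqF // mul1r in h2.
    have e : s * N (s^-1 *: u + v) = N (u + s *: v).
      rewrite -[X in X * _]gtr0_norm // -(NZ hN) scalerDr scalerA mulfV ?gt_eqF //.
      by rewrite scale1r.
    rewrite e in h2; lra.
split; first by move=> x Mx; have := f'E x 0 Mx; rewrite scale0r addr0 mul0r addr0.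
  by have := f'E 0 1 hM.1; rewrite scale1r add0r mul1r (linon0 hM hf) add0r.
Qed.

Lemma hb_iter x0 k : (k <= n)%N -> exists M f, [/\ subsp M, M x0,
  (forall i : 'I_n, (i < k)%N -> M (delta_mx 0 i)), linon M f & domon M f]
  /\ f x0 = N x0.
Proof.
elim: k => [_|k IH kn].
  have M0 : subsp [set 0].
    split => //= a x y -> ->; by rewrite scaler0 addr0.
  have l0 : linon [set 0] (fun _ => 0).
    by move=> *; rewrite mulr0 addr0.
  have d0 : domon [set 0] (fun _ => 0) by move=> x ->; rewrite (N0 hN).
  have [->|x0n] := eqVneq x0 0.
    exists [set 0], (fun _ => 0); split; first by split.
    by rewrite (N0 hN).
  have s1 : forall u, [set 0] u -> (fun _ => 0) u - N (u - x0) <= N x0.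
    by move=> u /= ->; rewrite !sub0r (NN hN); have := Nge0 hN x0; lra.
  have s2 : forall u, [set 0] u -> N x0 <= N (u + x0) - (fun _ => 0) u.
    by move=> u /= ->; rewrite add0r subr0.
  have [M [f [[hM _ Mv hf hd] [_ fv]]]] := hb_step M0 l0 d0
    (fun e => (negP x0n) (introT eqP e)) s1 s2.
  by exists M, f; split.
have [M [f [[hM Mx0 Mi hf hd] fx0]]] := IH (ltnW kn).
have [Mk|Mk] := pselect (M (delta_mx 0 (Ordinal kn))).
  exists M, f; split => //; split => // i; rewrite ltnS leq_eqVlt => /orP [/eqP ik|]; last exact: Mi.
  by have -> : i = Ordinal kn by apply: val_inj.
have [c [c1 c2]] := hb_c (delta_mx 0 (Ordinal kn)) hM hf hd.
have [M' [f' [[hM' MM' Mv hf' hd'] [ff' _]]]] := hb_step hM hf hd Mk c1 c2.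
exists M', f'; split; first split => //; first exact: MM'.
  move=> i; rewrite ltnS leq_eqVlt => /orP [/eqP ik|ik]; last exact/MM'/Mi.
  by have -> : i = Ordinal kn by apply: val_inj.
by rewrite ff'.
Qed.

Lemma HB x0 : exists f : 'cV[R]_n, (forall x, fapp f x <= N x) /\ fapp f x0 = N x0.
Proof.
have [M [f [[hM Mx0 Mi hf hd] fx0]]] := hb_iter x0 (leqnn n).
pose c : 'cV[R]_n := \col_i f (delta_mx 0 i).
have lin_sum : forall (r : seq 'I_n) (a : 'I_n -> R),
   M (\sum_(j <- r) a j *: delta_mx 0 j) /\
   f (\sum_(j <- r) a j *: delta_mx 0 j) = \sum_(j <- r) a j * f (delta_mx 0 j).
  move=> r a; elim: r => [|j r [IH1 IH2]]; first by rewrite !big_nil (linon0 hM hf); split => //; exact: hM.1.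
  rewrite !big_cons; split; first by apply: hM.2 => //; exact: Mi.
  by rewrite hf ?IH2 //; exact: Mi.
have fE : forall x, f x = fapp c x.
  move=> x; rewrite /fapp mxE [in LHS](row_sum_delta x) (lin_sum _ _).2.
  by apply: eq_bigr => j _; rewrite mxE.
have Mall : forall x, M x by move=> x; rewrite (row_sum_delta x); exact: (lin_sum _ _).1.
exists c; split; last by rewrite -fE.
by move=> x; rewrite -fE; exact: hd.
Qed.

End HahnBanach.

Section Conv.
Variables (R : realType) (V : lmodType R).
Definition inconv (S : set V) (x : V) :=
  exists s : seq (R * V), [/\ (forall p, p \in s -> 0 <= p.1 /\ S p.2),
     \sum_(p <- s) p.1 = 1 & x = \sum_(p <- s) p.1 *: p.2].

Lemma inconv1 (S : set V) x : S x -> inconv S x.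
Proof.
move=> Sx; exists [:: (1, x)]; split; last by rewrite big_seq1 scale1r.
  by move=> p; rewrite inE => /eqP -> /=.
by rewrite big_seq1.
Qed.

Lemma inconv_comb (S : set V) a b t : inconv S a -> inconv S b -> 0 <= t -> t <= 1 ->
  inconv S (t *: a + (1 - t) *: b).
Proof.
move=> [sa [pa sa1 ->]] [sb [pb sb1 ->]] t0 t1.
exists ([seq (t * p.1, p.2) | p <- sa] ++ [seq ((1 - t) * p.1, p.2) | p <- sb]).
split.
- move=> p; rewrite mem_cat => /orP [] /mapP [q qs ->] /=.
    by have [q0 Sq] := pa q qs; split => //; exact: mulr_ge0.
  by have [q0 Sq] := pb q qs; split => //; apply: mulr_ge0 => //; rewrite subr_ge0.
- by rewrite big_cat !big_map /= -!mulr_sumr sa1 sb1 !mulr1 addrC subrK.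
- rewrite big_cat !big_map /= !scaler_sumr; congr (_ + _); apply: eq_bigr => p _;
  by rewrite scalerA.
Qed.

Lemma inconv_sub (S S' : set V) x : S `<=` S' -> inconv S x -> inconv S' x.
Proof.
move=> SS [s [ps s1 e]]; exists s; split => // p ps'.
by have [? ?] := ps p ps'; split => //; exact: SS.
Qed.
End Conv.

Section Mink.
Variables (R : realType) (n : nat) (N : 'rV[R]_n -> R) (hN : is_norm N).
Implicit Types (x y u v d : 'rV[R]_n).

Definition Ldir y := [set d | exists e : R, 0 < e /\ N (y + e *: d) <= 1 /\ N (y - e *: d) <= 1].

Lemma Bconv a b t : N a <= 1 -> N b <= 1 -> 0 <= t <= 1 -> N (t *: a + (1 - t) *: b) <= 1.
Proof.
move=> ha hb /andP [t0 t1].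
apply: le_trans (ND hN _ _) _; rewrite !(NZ hN) !ger0_norm ?subr_ge0 //.
have := Nge0 hN a; have := Nge0 hN b => *; nra.
Qed.

Lemma Bseg y d e s : N y <= 1 -> N (y + e *: d) <= 1 -> 0 < e -> 0 <= s <= e ->
  N (y + s *: d) <= 1.
Proof.
move=> hy hd e0 /andP [s0 se].
have -> : y + s *: d = (s / e) *: (y + e *: d) + (1 - s / e) *: y.
  apply/matrixP => i j; rewrite !mxE; field; exact: lt0r_neq0.
apply: Bconv => //; apply/andP; split; first exact: divr_ge0 (ltW e0).
by rewrite ler_pdivrMr // mul1r.
Qed.

Lemma Ldir0 y : N y <= 1 -> Ldir y 0.
Proof. by move=> hy; exists 1; rewrite scaler0 addr0 subr0. Qed.

Lemma LdirN y d : Ldir y d -> Ldir y (- d).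
Proof. by move=> [e [e0 [h1 h2]]]; exists e; rewrite scalerN opprK; split. Qed.

Lemma LdirZ y a d : N y <= 1 -> Ldir y d -> Ldir y (a *: d).
Proof.
move=> hy hd; have [a0|a0|->] := ltgtP a 0; last by rewrite scale0r; exact: Ldir0.
  rewrite -(opprK a) scaleNr; apply: LdirN.
  move: hd => [e [e0 [h1 h2]]]; exists (e / - a); split; first by rewrite divr_gt0 // oppr_gt0.
  by rewrite scalerA mulfVK ?lt0r_neq0 ?oppr_gt0.
move: hd => [e [e0 [h1 h2]]]; exists (e / a); split; first by rewrite divr_gt0.
by rewrite scalerA mulfVK ?gt_eqF.
Qed.

Lemma LdirD y d1 d2 : N y <= 1 -> Ldir y d1 -> Ldir y d2 -> Ldir y (d1 + d2).
Proof.
move=> hy [e1 [e10 [h11 h12]]] [e2 [e20 [h21 h22]]].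
pose e := Num.min e1 e2.
have e0 : 0 < e by rewrite lt_min e10 e20.
have ee1 : e <= e1 by rewrite ge_min lexx.
have ee2 : e <= e2 by rewrite ge_min lexx orbT.
exists (e / 2); split; first by rewrite divr_gt0.
have H : forall s, N (y + e *: s d1) <= 1 -> N (y + e *: s d2) <= 1 ->
    N (y + (e / 2) *: (s d1 + s d2)) <= 1.
  move=> s g1 g2.
  have -> : y + (e / 2) *: (s d1 + s d2) =
     (1/2) *: (y + e *: s d1) + (1 - 1/2) *: (y + e *: s d2).
    apply/matrixP => i j; rewrite !mxE; by field.
  apply: Bconv => //; apply/andP; split; lra.
split.
  apply: (H id).
    by apply: (@Bseg y d1 e1 e hy h11 e10); rewrite (ltW e0) ee1.
  by apply: (@Bseg y d2 e2 e hy h21 e20); rewrite (ltW e0) ee2.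
rewrite -scalerN opprD; apply: (H (fun d => - d)).
  apply: (@Bseg y (- d1) e1 e hy); [by rewrite scalerN | exact: e10 | by rewrite (ltW e0) ee1].
apply: (@Bseg y (- d2) e2 e hy); [by rewrite scalerN | exact: e20 | by rewrite (ltW e0) ee2].
Qed.

Lemma Ldir_sum y k (W : 'M[R]_(k, n)) (c : 'rV[R]_k) : N y <= 1 -> (forall i, Ldir y (row i W)) ->
  Ldir y (c *m W).
Proof.
move=> hy hW; rewrite mulmx_sum_row; apply: (big_ind (Ldir y)).
- exact: Ldir0.
- by move=> a b; apply: LdirD.
- by move=> i _; apply: LdirZ.
Qed.

Lemma Ldir_extreme y : N y <= 1 -> (forall d, Ldir y d -> d = 0) ->
  extreme (unit_ball N) y.
Proof.
move=> hy H; split => // a b t ha hb /andP [t0 t1] ey.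
have ea : y + (1 - t) *: (a - b) = a.
  by rewrite ey; apply/matrixP => i j; rewrite !mxE; ring.
have eb : y + t *: (- (a - b)) = b.
  by rewrite ey; apply/matrixP => i j; rewrite !mxE; ring.
pose e := Num.min t (1 - t).
have e0 : 0 < e by rewrite lt_min t0 subr_gt0 t1.
have L : Ldir y (a - b).
  exists e; split => //; split.
    apply: (@Bseg y (a - b) (1 - t) e hy); [by rewrite ea | by rewrite subr_gt0 |].
    by rewrite (ltW e0) ge_min lexx orbT.
  rewrite -scalerN; apply: (@Bseg y (- (a - b)) t e hy); [by rewrite eb | by [] |].
  by rewrite (ltW e0) ge_min lexx.
have /eqP := H _ L; rewrite subr_eq0 => /eqP ab.
rewrite ey -ab; split => //; apply/matrixP => i j; rewrite !mxE; ring.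
Qed.

Lemma endpoint y d : N y <= 1 -> Ldir y d -> d != 0 ->
  exists s, [/\ 0 < s, N (y + s *: d) <= 1 & forall e, 0 < e -> 1 < N (y + (s + e) *: d)].
Proof.
move=> hy [e [e0 [he _]]] dn.
have Nd : 0 < N d := Ngt0 hN dn.
pose S := [set s : R | 0 <= s /\ N (y + s *: d) <= 1].
have S0 : S 0 by split => //; rewrite scale0r addr0.
have Sb : forall s, S s -> s <= (1 + N y) / N d.
  move=> s [s0 hs]; rewrite ler_pdivlMr //.
  have : N (s *: d) <= N (y + s *: d) + N y.
    by have := NBs hN (y + s *: d) y; rewrite addrAC subrr add0r.
  by rewrite (NZ hN) ger0_norm //; lra.
have hS : has_sup S by split; [exists 0 | exists ((1 + N y) / N d) => s /Sb].
have eS : S e by split => //; exact: ltW.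
have es := sup_upper_bound hS eS.
exists (sup S); split.
- exact: lt_le_trans es.
- apply/ler_addgt0Pr => eta eta0.
  have [s [s0 hs] ss] := sup_adherent (divr_gt0 eta0 Nd) hS.
  have sle := sup_upper_bound hS (conj s0 hs).
  have -> : y + sup S *: d = (y + s *: d) + (sup S - s) *: d.
    by apply/matrixP => i j; rewrite !mxE; ring.
  apply: le_trans (ND hN _ _) _; rewrite (NZ hN) ger0_norm ?subr_ge0 //.
  have : (sup S - s) * N d <= eta.
    by rewrite -ler_pdivlMr //; lra.
  lra.
- move=> e' e'0; rewrite ltNge; apply/negP => h.
  have : S (sup S + e') by split => //; lra.
  move/(sup_upper_bound hS); lra.
Qed.

Lemma Ldir_mono y y1 y2 l : N y1 <= 1 -> N y2 <= 1 -> 0 < l -> l < 1 ->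
  y = l *: y1 + (1 - l) *: y2 -> Ldir y1 `<=` Ldir y.
Proof.
move=> h1 h2 l0 l1 ey d [e [e0 [g1 g2]]]; exists (l * e); split; first exact: mulr_gt0.
have hl : 0 <= l <= 1 by rewrite (ltW l0) (ltW l1).
split.
  have -> : y + (l * e) *: d = l *: (y1 + e *: d) + (1 - l) *: y2.
    by rewrite ey; apply/matrixP => i j; rewrite !mxE; ring.
  exact: Bconv.
have -> : y - (l * e) *: d = l *: (y1 - e *: d) + (1 - l) *: y2.
  by rewrite ey; apply/matrixP => i j; rewrite !mxE; ring.
exact: Bconv.
Qed.

Definition injW k (W : 'M[R]_(k, n)) := forall c : 'rV[R]_k, c *m W = 0 -> c = 0.

Lemma family_step k y y' d : N y <= 1 -> N y' <= 1 -> Ldir y d -> ~ Ldir y' d ->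
  Ldir y' `<=` Ldir y ->
  (forall W : 'M[R]_(k.+1, n), (forall i, Ldir y (row i W)) -> ~ injW W) ->
  (forall W : 'M[R]_(k, n), (forall i, Ldir y' (row i W)) -> ~ injW W).
Proof.
move=> hy hy' Ld nLd sub H W hW iW.
apply: (H (col_mx d W : 'M_(1 + k, n))).
  move=> i; case: (@split_ordP 1 k i) => j ->; first by rewrite (@rowKu _ 1 k n j d W) row_id.
  by rewrite (@rowKd _ 1 k n j d W); apply: sub.
move=> c; rewrite -(@hsubmxK _ 1 1 k c) (@mul_row_col _ 1 1 k n).
set a := @lsubmx _ 1 1 k c; set b := @rsubmx _ 1 1 k c.
rewrite [a]mx11_scalar mul_scalar_mx => e.
have a0 : a 0 0 = 0.
  apply/eqP; apply/negP => /negP an; apply: nLd.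
  have e2 : a 0 0 *: d = - (b *m W) by apply/eqP; rewrite -addr_eq0; apply/eqP.
  have -> : d = (- (a 0 0)^-1) *: (b *m W).
    by rewrite scaleNr -scalerN -e2 scalerA mulVf // scale1r.
  by apply: LdirZ => //; apply: Ldir_sum.
rewrite a0 scale0r add0r in e.
have -> := iW _ e.
rewrite a0; have -> : (0 : R)%:M = 0 :> 'M_1 by apply/matrixP => i j; rewrite !mxE mul0rn.
exact: (row_mx0 _ 1 1 k).
Qed.

Lemma descent k : forall y, N y <= 1 ->
  (forall W : 'M[R]_(k, n), (forall i, Ldir y (row i W)) -> ~ injW W) ->
  inconv (extreme (unit_ball N)) y.
Proof.
elim: k => [|k IH] y hy H.
  exfalso; apply: (H 0) => [i|c _]; [by case: i | exact: thinmx0].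
have [[d [Ld dn]]|nd] := pselect (exists d, Ldir y d /\ d != 0); last first.
  apply: inconv1; apply: Ldir_extreme => // d Ld; apply/eqP; apply/negPn/negP => dn.
  by apply: nd; exists d.
have [s1 [s10 h1 o1]] := endpoint hy Ld dn.
have dn' : - d != 0 by rewrite oppr_eq0.
have [s2 [s20 h2 o2]] := endpoint hy (LdirN Ld) dn'.
set y1 := y + s1 *: d in h1 o1; set y2 := y + s2 *: - d in h2 o2.
have s12 : s1 + s2 != 0 by rewrite gt_eqF // addr_gt0.
have ey : y = (s2 / (s1 + s2)) *: y1 + (1 - s2 / (s1 + s2)) *: y2.
  by rewrite /y1 /y2; apply/matrixP => i j; rewrite !mxE; field.
have ey' : y = (s1 / (s1 + s2)) *: y2 + (1 - s1 / (s1 + s2)) *: y1.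
  by rewrite /y1 /y2; apply/matrixP => i j; rewrite !mxE; field.
have l0 : 0 < s2 / (s1 + s2) by rewrite divr_gt0 // addr_gt0.
have l1 : s2 / (s1 + s2) < 1 by rewrite ltr_pdivrMr ?addr_gt0 // mul1r ltrDr.
have l0' : 0 < s1 / (s1 + s2) by rewrite divr_gt0 // addr_gt0.
have l1' : s1 / (s1 + s2) < 1 by rewrite ltr_pdivrMr ?addr_gt0 // mul1r ltrDl.
have sub1 := Ldir_mono h1 h2 l0 l1 ey.
have sub2 := Ldir_mono h2 h1 l0' l1' ey'.
have nL1 : ~ Ldir y1 d.
  move=> [e [e0 [g _]]]; have := o1 e e0.
  have -> : y + (s1 + e) *: d = y1 + e *: d by rewrite /y1 scalerDl addrA.
  lra.
have nL2 : ~ Ldir y2 (- d).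
  move=> [e [e0 [g _]]]; have := o2 e e0.
  have -> : y + (s2 + e) *: - d = y2 + e *: - d by rewrite /y2 scalerDl addrA.
  lra.
have c1 := IH y1 h1 (family_step hy h1 Ld nL1 sub1 H).
have c2 := IH y2 h2 (family_step hy h2 (LdirN Ld) nL2 sub2 H).
rewrite ey; apply: inconv_comb => //; exact: ltW.
Qed.

Lemma minkowski y : N y <= 1 -> inconv (extreme (unit_ball N)) y.
Proof.
move=> hy; apply: (@descent n.+1) => // W _ iW.
have := rank_leq_col W; by rewrite (eqP (inj_row_free iW)) ltnn.
Qed.


End Mink.

Lemma sum_le_mem (R : realDomainType) (T : eqType) (s : seq T) (F : T -> R) x :
  (forall y, y \in s -> 0 <= F y) -> x \in s -> F x <= \sum_(y <- s) F y.
Proof.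
elim: s => [//|a s IH] h; rewrite inE big_cons => /orP [/eqP ->|xs].
  rewrite lerDl big_seq; apply: sumr_ge0 => y ys; apply: h; by rewrite inE ys orbT.
have h' : forall y, y \in s -> 0 <= F y by move=> y ys; apply: h; rewrite inE ys orbT.
apply: le_trans (IH h' xs) _; rewrite lerDr; apply: h; exact: mem_head.
Qed.

Section Dual.
Variables (R : realType) (n : nat) (N : 'rV[R]_n -> R) (hN : is_norm N).
Variable sV : seq 'rV[R]_n.
Hypothesis hV : extreme (unit_ball N) = [set` sV].
Implicit Types (x y z w : 'rV[R]_n) (f g h e : 'cV[R]_n).

Lemma sV_ball v : v \in sV -> N v <= 1.
Proof. by move=> vs; have : [set` sV] v by []; rewrite -hV => -[]. Qed.


Definition Mf f := \sum_(v <- sV) `|fapp f v|.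

Lemma ball_bound f x : N x <= 1 -> `|fapp f x| <= Mf f.
Proof.
move=> hx; have [s [ps s1 ->]] := minkowski hN hx.
rewrite fapp_sum; apply: le_trans (ler_norm_sum _ _ _) _.
have -> : Mf f = \sum_(p <- s) p.1 * Mf f by rewrite -mulr_suml s1 mul1r.
rewrite big_seq [X in _ <= X]big_seq; apply: ler_sum => p ps'.
have [p0 pV] := ps p ps'.
rewrite fappZ normrM ger0_norm //; apply: ler_wpM2l => //.
rewrite /Mf; apply: (sum_le_mem (F := fun v => `|fapp f v|)) => //; by move: pV; rewrite hV.
Qed.

Let S f := [set `|fapp f x| | x in [set x | N x <= 1]].
Lemma has_supS f : has_sup (S f).
Proof.
split; first by exists (`|fapp f 0|); exists 0 => //=; rewrite (N0 hN).
by exists (Mf f) => _ [x hx <-]; exact: ball_bound.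
Qed.

Lemma dn_ub f x : N x <= 1 -> `|fapp f x| <= dualnorm N f.
Proof. by move=> hx; rewrite /dualnorm; apply: (sup_upper_bound (has_supS f)); exists x. Qed.

Lemma dn_ge0 f : 0 <= dualnorm N f.
Proof. by apply: le_trans (dn_ub f (x := 0) _); rewrite ?(N0 hN). Qed.

Lemma dn_le f c : (forall x, N x <= 1 -> `|fapp f x| <= c) -> dualnorm N f <= c.
Proof.
move=> H; apply: ge_sup; first by exists (`|fapp f 0|); exists 0 => //=; rewrite (N0 hN).
by move=> _ [x hx <-]; exact: H.
Qed.

Lemma dn_bound f x : `|fapp f x| <= dualnorm N f * N x.
Proof.
have [->|xn] := eqVneq x 0; first by rewrite fapp0 normr0 (N0 hN) mulr0.
have Nx := Ngt0 hN xn.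
have h1 : N ((N x)^-1 *: x) <= 1.
  by rewrite (NZ hN) ger0_norm ?invr_ge0 ?(ltW Nx) // mulVf ?gt_eqF.
have := dn_ub f h1; rewrite fappZ normrM ger0_norm ?invr_ge0 ?(ltW Nx) // => h.
by have := ler_wpM2r (ltW Nx) h; rewrite mulrAC mulVf ?gt_eqF // mul1r.
Qed.

Lemma dball f : dual_unit_ball N f <-> forall x, fapp f x <= N x.
Proof.
split.
  move=> hf x; apply: le_trans (ler_norm _) _; apply: le_trans (dn_bound f x) _.
  by apply: ler_piMl => //; exact: Nge0.
move=> H; rewrite /dual_unit_ball /=; apply: dn_le => x hx.
apply: le_trans hx; rewrite ler_norml H andbT lerNl -fappN -(NN hN); exact: H.
Qed.

Lemma Jchar x h : x != 0 -> (Jset N x h <-> (forall w, fapp h w <= N w) /\ fapp h x = N x).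
Proof.
move=> xn; split.
  by move=> [d1 hx]; split => //; apply/dball; rewrite /dual_unit_ball /= d1.
move=> [H hx]; split => //; apply/eqP; rewrite eq_le; apply/andP; split.
  exact/dball.
have := dn_bound h x; rewrite hx ger0_norm ?Nge0 // -{1}[N x]mul1r.
by rewrite ler_pM2r // Ngt0.
Qed.

Lemma Jne x : x != 0 -> exists h, Jset N x h.
Proof.
move=> xn; have [h [h1 h2]] := HB hN x; exists h; exact/Jchar.
Qed.


Definition Pd := [set f : 'cV[R]_n | forall v, v \in sV -> fapp f v <= 1].

Lemma conv_le1 f x : Pd f -> N x <= 1 -> fapp f x <= 1.
Proof.
move=> Pf hx; have [s [ps s1 ->]] := minkowski hN hx.
rewrite fapp_sum -s1 big_seq [X in _ <= X]big_seq; apply: ler_sum => p ps'.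
have [p0 pV] := ps p ps'; rewrite fappZ -[X in _ <= X]mulr1; apply: ler_wpM2l => //.
by apply: Pf; move: pV; rewrite hV.
Qed.

Lemma Pd_le f x : Pd f -> fapp f x <= N x.
Proof.
move=> Pf; have [->|xn] := eqVneq x 0; first by rewrite fapp0 (N0 hN).
have Nx := Ngt0 hN xn.
have h1 : N ((N x)^-1 *: x) <= 1.
  by rewrite (NZ hN) ger0_norm ?invr_ge0 ?(ltW Nx) // mulVf ?gt_eqF.
have := conv_le1 Pf h1; rewrite fappZ => h.
by have := ler_wpM2r (ltW Nx) h; rewrite mulrAC mulVf ?gt_eqF // !mul1r.
Qed.

Lemma dball_P : dual_unit_ball N = Pd.
Proof.
apply/seteqP; split => f.
  move/dball => H v vs; apply: le_trans (H v) _; exact: sV_ball.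
by move=> Pf; apply/dball => x; exact: Pd_le.
Qed.

Definition act f := [seq v <- sV | fapp f v == 1].
Definition spans (A : seq 'rV[R]_n) :=
  forall g : 'cV[R]_n, (forall v, v \in A -> fapp g v = 0) -> g = 0.

Lemma vertex1 f : Pd f -> spans (act f) -> extreme Pd f.
Proof.
move=> Pf sp; split => // a b t Pa Pb /andP [t0 t1] ef.
have key : forall v, v \in act f -> fapp a v = 1 /\ fapp b v = 1.
  move=> v; rewrite mem_filter => /andP [/eqP fv vs].
  have := Pa v vs; have := Pb v vs; move: fv; rewrite ef fappDf !fappZf => *.
  split; nra.
have ea : a = f.
  apply/eqP; rewrite -subr_eq0; apply/eqP; apply: sp => v va.
  have [ha _] := key v va; move: va; rewrite mem_filter => /andP [/eqP fv _].
  by rewrite fappBf ha fv subrr.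
split => //; apply/eqP; rewrite -subr_eq0; apply/eqP; apply: sp => v va.
have [_ hb] := key v va; move: va; rewrite mem_filter => /andP [/eqP fv _].
by rewrite fappBf hb fv subrr.
Qed.

Lemma small_eps (T : eqType) (s : seq T) (F G : T -> R) :
  (forall t : T, t \in s -> 0 < G t) -> exists2 e, 0 < e & forall t : T, t \in s -> e * `|F t| < G t.
Proof.
elim: s => [|a s IH] H; first by exists 1.
have [e e0 He] := IH (fun t ts => H t (@mem_behead _ (a :: s) t ts)).
have Ga := H a (mem_head _ _).
pose e' := Num.min e (G a / (`|F a| + 1)).
have e'0 : 0 < e' by rewrite lt_min e0 divr_gt0 // ltr_wpDl.
exists e' => // t; rewrite inE => /orP [/eqP ->|xs].
  have h : e' <= G a / (`|F a| + 1) by rewrite ge_min lexx orbT.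
  have h2 : e' * `|F a| <= G a / (`|F a| + 1) * `|F a| by apply: ler_wpM2r.
  apply: le_lt_trans h2 _; rewrite mulrAC ltr_pdivrMr ?ltr_wpDl //.
  by rewrite mulrDr mulr1 ltrDl.
have h : e' <= e by rewrite ge_min lexx.
apply: le_lt_trans (He t xs); exact: ler_wpM2r.
Qed.

Lemma vertex2 f : extreme Pd f -> spans (act f).
Proof.
move=> [Pf ext] g hg; apply/eqP; apply/negPn/negP => gn.
have [e e0 He] := @small_eps _ [seq v <- sV | fapp f v < 1] (fapp g) (fun v => 1 - fapp f v)
  (fun v => ltac:(by rewrite mem_filter subr_gt0 => /andP [])).
have Pp : forall s, `|s| <= 1 -> Pd (f + (s * e) *: g).
  move=> s hs v vs; rewrite fappDf fappZf.
  have [fv|fv] := eqVneq (fapp f v) 1.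
    by rewrite hg ?mulr0 ?addr0 ?fv // mem_filter fv eqxx.
  have fl : fapp f v < 1 by rewrite lt_neqAle fv Pf.
  have := He v; rewrite mem_filter fl vs => /(_ isT) h.
  have : s * e * fapp g v <= e * `|fapp g v|.
    apply: le_trans (ler_norm _) _; rewrite !normrM (gtr0_norm e0) -mulrA.
    by apply: ler_piMl => //; apply: mulr_ge0 (ltW e0) (normr_ge0 _).
  lra.
have h1 : `|1 : R| <= 1 by rewrite normr1.
have h2 : `|-1 : R| <= 1 by rewrite normrN normr1.
have ht : ((0 : R) < 1/2) && (1/2 < (1 : R)) by apply/andP; split; lra.
have ef : f = 1/2 *: (f + (1 * e) *: g) + (1 - 1/2) *: (f + (-1 * e) *: g).
  by apply/matrixP => i j; rewrite !mxE; field.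
have [ea _] := ext _ _ _ (Pp 1 h1) (Pp (-1) h2) ht ef.
have : (1 * e) *: g = 0 by rewrite -(addKr f ((1 * e) *: g)) ea addNr.
move/eqP; rewrite scaler_eq0 mul1r => /orP [] /eqP.
  by move=> e00; move: e0; rewrite e00 ltxx.
by move=> g0; move: gn; rewrite g0 eqxx.
Qed.



Definition mk f : {ffun 'I_(size sV) -> bool} := [ffun i : 'I_(size sV) => fapp f (nth 0 sV i) == 1].

Definition Elist := [seq e <- [seq xget 0 [set f | extreme Pd f /\ mk f = m]
   | m <- enum {ffun 'I_(size sV) -> bool}] | `[< extreme Pd e >]].

Lemma Elist_ext e : e \in Elist -> extreme Pd e.
Proof. by rewrite mem_filter => /andP [/asboolP]. Qed.

Lemma ext_Elist f : extreme Pd f -> f \in Elist.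
Proof.
move=> ef; rewrite mem_filter; apply/andP; split; first exact/asboolP.
apply/mapP; exists (mk f); first by rewrite mem_enum.
set P := [set f0 | _]; have PP : P f by [].
have [ef' mf'] : P (xget 0 P) := xgetPex 0 (ex_intro _ _ PP).
set f' := xget 0 P in ef' mf' *.
apply/eqP; rewrite eq_sym -subr_eq0; apply/eqP; apply: (vertex2 ef) => v.
rewrite mem_filter => /andP [/eqP fv vs].
have im : (index v sV < size sV)%N by rewrite index_mem.
have := congr1 (fun m : {ffun 'I_(size sV) -> bool} => m (Ordinal im)) mf'; rewrite !ffunE /= nth_index // fv eqxx.
move=> h; have h' : fapp f' v = 1 by apply/eqP; rewrite h.
by rewrite fappBf h' fv subrr.
Qed.

Lemma conv_bound f x c : (forall v, v \in sV -> fapp f v <= c) -> N x <= 1 -> fapp f x <= c.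
Proof.
move=> Pf hx; have [s [ps s1 ->]] := minkowski hN hx.
have -> : c = \sum_(p <- s) p.1 * c by rewrite -mulr_suml s1 mul1r.
rewrite fapp_sum big_seq [X in _ <= X]big_seq; apply: ler_sum => p ps'.
have [p0 pV] := ps p ps'; rewrite fappZ; apply: ler_wpM2l => //.
by apply: Pf; move: pV; rewrite hV.
Qed.

Lemma nonpos_zero g : (forall v, v \in sV -> fapp g v <= 0) -> g = 0.
Proof.
move=> H.
have H1 : forall x, fapp g x <= 0.
  move=> x; have [->|xn] := eqVneq x 0; first by rewrite fapp0.
  have Nx := Ngt0 hN xn.
  have h1 : N ((N x)^-1 *: x) <= 1.
    by rewrite (NZ hN) ger0_norm ?invr_ge0 ?(ltW Nx) // mulVf ?gt_eqF.
  have := conv_bound H h1; rewrite fappZ pmulr_rle0 // invr_gt0 //.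
apply: fapp_inj => x; rewrite fapp0f; apply/eqP; rewrite eq_le H1 /=.
by have := H1 (- x); rewrite fappN oppr_le0.
Qed.

Lemma list_argmin (T : eqType) (s : seq T) (h : T -> R) : s != [::] ->
  exists2 t, t \in s & forall u, u \in s -> h t <= h u.
Proof.
elim: s => [//|a s IH] _.
have [->|sn] := eqVneq s [::].
  by exists a; rewrite ?mem_head // => u; rewrite inE => /eqP ->.
have [t ts Ht] := IH sn.
have [ht|ht] := leP (h a) (h t).
  exists a; first exact: mem_head.
  move=> u; rewrite inE => /orP [/eqP ->//|us]; exact: le_trans ht (Ht u us).
exists t; first by rewrite inE ts orbT.
move=> u; rewrite inE => /orP [/eqP ->|us]; [exact: ltW | exact: Ht].
Qed.

Lemma count_le (T : eqType) (s : seq T) (P Q : pred T) :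
  (forall t, t \in s -> P t -> Q t) -> (count P s <= count Q s)%N.
Proof.
elim: s => [//|a s IH] H /=.
have H' : forall u, u \in s -> P u -> Q u by move=> u us; apply: H; rewrite inE us orbT.
have := IH H'; have := H a (mem_head _ _).
case: (P a); case: (Q a) => //= Ha h; try lia; by have := Ha isT.
Qed.

Lemma count_lt (T : eqType) (s : seq T) (P Q : pred T) :
  (forall t, t \in s -> P t -> Q t) -> (exists2 t, t \in s & Q t && ~~ P t) ->
  (count P s < count Q s)%N.
Proof.
elim: s => [_ [t]//|a s IH] H [t ts /andP [Qt nPt]] /=.
have H' : forall u, u \in s -> P u -> Q u by move=> u us; apply: H; rewrite inE us orbT.
have Ha := H a (mem_head _ _).
move: ts; rewrite inE => /orP [/eqP ta|ts].
  move: Qt nPt; rewrite ta => -> /negbTE -> /=.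
  by have := count_le H'; lia.
have := IH H' (ex_intro2 _ _ t ts (introT andP (conj Qt nPt))).
case: (P a) Ha; case: (Q a) => //= Ha h; try lia; by have := Ha isT.
Qed.


Definition cnt f := count (fun v => fapp f v < 1) sV.

Lemma step_dir f g : Pd f -> g != 0 -> (forall v, v \in act f -> fapp g v = 0) ->
  exists t, [/\ 0 < t, Pd (f + t *: g) & (cnt (f + t *: g) < cnt f)%N].
Proof.
move=> Pf gn hg.
pose sp := [seq v <- sV | 0 < fapp g v].
have spn : sp != [::].
  apply/negP => /eqP sp0; move/eqP: gn; apply; apply: nonpos_zero => v vs.
  rewrite leNgt; apply/negP => gv.
  have : v \in sp by rewrite mem_filter gv vs.
  by rewrite sp0.
have [w ws Hw] := list_argmin (fun v => (1 - fapp f v) / fapp g v) spn.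
move: ws; rewrite mem_filter => /andP [gw wV].
have fw : fapp f w < 1.
  rewrite lt_neqAle Pf // andbT; apply/negP => /eqP fw.
  have : fapp g w = 0 by apply: hg; rewrite mem_filter fw eqxx.
  by move=> g0; move: gw; rewrite g0 ltxx.
exists ((1 - fapp f w) / fapp g w); split.
- by rewrite divr_gt0 // subr_gt0.
- move=> v vs; rewrite fappDf fappZf.
  have [gv|gv] := ltP 0 (fapp g v).
    have := Hw v; rewrite mem_filter gv vs => /(_ isT).
    move=> h; have := ler_wpM2r (ltW gv) h; rewrite divfK ?gt_eqF //; lra.
  have : (1 - fapp f w) / fapp g w * fapp g v <= 0.
    by rewrite pmulr_rle0 // divr_gt0 // subr_gt0.
  have := Pf v vs; lra.
- apply: count_lt.
    move=> v vs /= h; rewrite lt_neqAle Pf // andbT; apply/negP => /eqP fv.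
    have : fapp g v = 0 by apply: hg; rewrite mem_filter fv eqxx.
    by move=> g0; move: h; rewrite fappDf fappZf g0 mulr0 addr0 fv ltxx.
  exists w => //; rewrite fw /= fappDf fappZf mulfVK ?gt_eqF //.
  by rewrite addrC subrK ltxx.
Qed.

Lemma dual_conv f : Pd f -> inconv (extreme Pd) f.
Proof.
suff H : forall k f, Pd f -> (cnt f <= k)%N -> inconv (extreme Pd) f by move=> Pf; exact: H.
elim=> [|k IH] {}f Pf hk.
  have [sp|nsp] := pselect (spans (act f)); first exact/inconv1/vertex1.
  have [g [gn hg]] : exists g, g != 0 /\ forall v, v \in act f -> fapp g v = 0.
    apply: contrapT => H; apply: nsp => g hg; apply/eqP; apply/negPn/negP => gn.
    by apply: H; exists g.
  have [t [_ _ ht]] := step_dir Pf gn hg.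
  by move: hk; rewrite leqn0 => /eqP h; rewrite h in ht.
have [sp|nsp] := pselect (spans (act f)); first exact/inconv1/vertex1.
have [g [gn hg]] : exists g, g != 0 /\ forall v, v \in act f -> fapp g v = 0.
  apply: contrapT => H; apply: nsp => g hg; apply/eqP; apply/negPn/negP => gn.
  by apply: H; exists g.
have [t1 [t10 P1 c1]] := step_dir Pf gn hg.
have gn' : - g != 0 by rewrite oppr_eq0.
have hg' : forall v, v \in act f -> fapp (- g) v = 0 by move=> v va; rewrite fappNf hg // oppr0.
have [t2 [t20 P2 c2]] := step_dir Pf gn' hg'.
have i1 := IH _ P1 (leq_trans c1 hk).
have i2 := IH _ P2 (leq_trans c2 hk).
have t12 : t1 + t2 != 0 by rewrite gt_eqF // addr_gt0.
have -> : f = (t2 / (t1 + t2)) *: (f + t1 *: g) + (1 - t2 / (t1 + t2)) *: (f + t2 *: - g).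
  by apply/matrixP => i j; rewrite !mxE; field.
apply: inconv_comb => //; first by rewrite divr_ge0 // ltW // addr_gt0.
by rewrite ler_pdivrMr ?addr_gt0 // mul1r lerDr ltW.
Qed.

Lemma sum_le_seq (T : eqType) (s : seq T) (F G : T -> R) :
  (forall t, t \in s -> F t <= G t) -> \sum_(t <- s) F t <= \sum_(t <- s) G t.
Proof. by move=> H; rewrite big_seq [X in _ <= X]big_seq; apply: ler_sum. Qed.

Lemma sum_ones (T : Type) (s : seq T) : \sum_(t <- s) (1 : R) = (size s)%:R.
Proof. by elim: s => [|a s IH]; rewrite ?big_nil // big_cons IH /= -add1n natrD. Qed.

Lemma sum_eq1 (T : eqType) (s : seq T) (F : T -> R) :
  (forall t, t \in s -> F t <= 1) -> \sum_(t <- s) F t = (size s)%:R ->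
  forall t, t \in s -> F t = 1.
Proof.
elim: s => [//|a s IH] H; rewrite big_cons /= => e.
have H' : forall t, t \in s -> F t <= 1 by move=> t ts; apply: H; rewrite inE ts orbT.
have le : \sum_(t <- s) F t <= (size s)%:R.
  by rewrite -sum_ones; apply: sum_le_seq.
have Fa := H a (mem_head _ _).
have Fa1 : F a = 1 by move: e; rewrite -addn1 natrD; lra.
move=> t; rewrite inE => /orP [/eqP ->//|]; apply: IH => //.
by move: e; rewrite Fa1 -addn1 natrD addrC => /addIr.
Qed.

Lemma Jset_Pd x h : x != 0 -> Jset N x h <-> Pd h /\ fapp h x = N x.
Proof.
move=> xn; rewrite Jchar //; split => -[H1 H2]; split => //.
  by rewrite -dball_P; apply/dball.
by move=> w; apply: Pd_le.
Qed.

Lemma Sm_ne e : (0 < n)%N -> extreme Pd e -> exists z, Sm N e z.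
Proof.
move=> n0 ee; have sp := vertex2 ee; have Pe := ee.1.
set A := act e in sp.
have An : A != [::].
  apply/negP => /eqP A0.
  have := sp (delta_mx (Ordinal n0) 0); rewrite A0 => /(_ (fun v => ltac:(by []))) /matrixP.
  by move=> /(_ (Ordinal n0) 0); rewrite !mxE !eqxx /= => /eqP; rewrite oner_eq0.
pose z := \sum_(v <- A) v.
have AV : forall v, v \in A -> v \in sV /\ fapp e v = 1.
  by move=> v; rewrite mem_filter => /andP [/eqP -> ->].
have ez : fapp e z = (size A)%:R.
  rewrite fapp_sum -sum_ones big_seq [X in _ = X]big_seq.
  by apply: eq_bigr => v va; have [_ ->] := AV v va.
have Nz1 : N z <= (size A)%:R.
  apply: le_trans (N_sum hN _ _) _; rewrite -sum_ones; apply: sum_le_seq => v va.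
  by apply: sV_ball; have [] := AV v va.
have Nz : N z = (size A)%:R.
  apply/eqP; rewrite eq_le Nz1 /= -ez; exact: Pd_le.
have zn : z != 0.
  apply/negP => /eqP z0; move: Nz; rewrite z0 (N0 hN) => /eqP.
  by rewrite eq_sym pnatr_eq0 size_eq0; apply/negP.
exists z; split => //; apply/seteqP; split => h.
  move/(Jset_Pd _ zn) => [Ph hz] /=.
  have all1 := @sum_eq1 _ A (fapp h) (fun v va => Ph v (AV v va).1).
  have e1 : forall v, v \in A -> fapp h v = 1.
    by apply: all1; rewrite -fapp_sum hz Nz.
  apply/eqP; rewrite -subr_eq0; apply/eqP; apply: sp => v va.
  by rewrite fappBf e1 // (AV v va).2 subrr.
by move=> -> /=; apply/(Jset_Pd _ zn); split => //; rewrite ez Nz.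
Qed.

Lemma psum_seq_eq0 (T : eqType) (s : seq T) (F : T -> R) :
  (forall t, t \in s -> 0 <= F t) -> \sum_(t <- s) F t = 0 -> forall t, t \in s -> F t = 0.
Proof.
elim: s => [//|a s IH] H; rewrite big_cons => e.
have H' : forall t, t \in s -> 0 <= F t by move=> t ts; apply: H; rewrite inE ts orbT.
have s0 : 0 <= \sum_(t <- s) F t by rewrite big_seq; apply: sumr_ge0 => t ts; exact: H'.
have a0 := H a (mem_head _ _).
have Fa : F a = 0 by lra.
move=> t; rewrite inE => /orP [/eqP ->//|]; apply: IH => //; lra.
Qed.

Lemma conv_attain (s : seq (R * 'cV[R]_n)) w h :
  (forall p, p \in s -> 0 <= p.1 /\ Pd p.2) -> \sum_(p <- s) p.1 = 1 ->
  h = \sum_(p <- s) p.1 *: p.2 -> fapp h w = N w ->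
  forall p, p \in s -> 0 < p.1 -> fapp p.2 w = N w.
Proof.
move=> ps s1 eh hw.
have e1 : fapp h w = \sum_(p <- s) p.1 * fapp p.2 w.
  by rewrite eh fapp_sumf; apply: eq_bigr => p _; rewrite fappZf.
have key : \sum_(p <- s) p.1 * (N w - fapp p.2 w) = 0.
  have -> : \sum_(p <- s) p.1 * (N w - fapp p.2 w) =
     \sum_(p <- s) p.1 * N w - \sum_(p <- s) p.1 * fapp p.2 w.
    by rewrite -sumrB; apply: eq_bigr => p _; rewrite mulrBr.
  by rewrite -mulr_suml s1 mul1r -e1 hw subrr.
have nn : forall p, p \in s -> 0 <= p.1 * (N w - fapp p.2 w).
  move=> p pin; have [p0 Pp] := ps p pin; apply: mulr_ge0 => //.
  by rewrite subr_ge0; apply: Pd_le.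
move=> p pin p0; have := psum_seq_eq0 nn key pin.
move/eqP; rewrite mulf_eq0 gt_eqF //= subr_eq0 => /eqP <-.
by [].
Qed.

Lemma pos_weight (s : seq (R * 'cV[R]_n)) :
  (forall p, p \in s -> 0 <= p.1) -> \sum_(p <- s) p.1 = 1 -> exists2 p, p \in s & 0 < p.1.
Proof.
move=> ps s1; apply: contrapT => H.
have : \sum_(p <- s) p.1 = 0.
  rewrite big_seq big1 // => p pin; apply/eqP; rewrite eq_le ps // andbT leNgt.
  by apply/negP => p0; apply: H; exists p.
by rewrite s1 => /eqP; rewrite oner_eq0.
Qed.

Lemma ext_attain h : Pd h -> exists e, extreme Pd e /\ forall w, fapp h w = N w -> fapp e w = N w.
Proof.
move=> Ph; have [s [ps s1 eh]] := dual_conv Ph.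
have [p pin p0] := pos_weight (fun p pin => (ps p pin).1) s1.
exists p.2; split; first exact: (ps p pin).2.
move=> w hw; apply: (conv_attain _ s1 eh hw pin p0).
by move=> q qin; have [q0 [Pq _]] := ps q qin.
Qed.

Lemma J_unique w e : w != 0 -> extreme Pd e ->
  (forall e', extreme Pd e' -> fapp e' w = N w -> e' = e) -> Jset N w = [set e].
Proof.
move=> wn ee H.
have [h0 /(Jset_Pd _ wn) [Ph0 hw0]] := Jne wn.
have [e1 [ee1 a1]] := ext_attain Ph0.
have ew : fapp e w = N w by rewrite -(H e1 ee1 (a1 w hw0)); exact: a1.
apply/seteqP; split => h.
  move/(Jset_Pd _ wn) => [Ph hw] /=.
  have [s [ps s1 eh]] := dual_conv Ph.
  have ps' : forall p, p \in s -> 0 <= p.1 /\ Pd p.2.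
    by move=> q qin; have [q0 [Pq _]] := ps q qin.
  rewrite eh; have -> : \sum_(p <- s) p.1 *: p.2 = \sum_(p <- s) p.1 *: e.
    rewrite big_seq [X in _ = X]big_seq; apply: eq_bigr => p pin.
    have [p0 ep] := ps p pin; have [p00|p0'] := eqVneq p.1 0; first by rewrite p00 !scale0r.
    have pp : 0 < p.1 by rewrite lt_neqAle eq_sym p0' p0.
    by rewrite (H _ ep (conv_attain ps' s1 eh hw pin pp)).
  by rewrite -scaler_suml s1 scale1r.
by move=> /= ->; apply/(Jset_Pd _ wn); split => //; exact: ee.1.
Qed.

Lemma Pd_ext_le e x : extreme Pd e -> fapp e x <= N x.
Proof. by move=> ee; apply: Pd_le; exact: ee.1. Qed.

Lemma Sm_radial e z d : extreme Pd e -> Sm N e z ->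
  exists2 t0, 0 < t0 & forall t, 0 < t -> t <= t0 -> Sm N e (z + t *: d).
Proof.
move=> ee [zn Jz].
have Jze : Jset N z e by rewrite Jz.
have ez : fapp e z = N z by case: Jze.
have Nz := Ngt0 hN zn.
have lt : forall e', extreme Pd e' -> e' != e -> fapp e' z < N z.
  move=> e' ee' ne; rewrite lt_neqAle Pd_ext_le // andbT; apply/negP => /eqP h.
  have : Jset N z e' by apply/(Jset_Pd _ zn); split => //; exact: ee'.1.
  by rewrite Jz => /= h'; move: ne; rewrite h' eqxx.
have [e1 e10 He1] := @small_eps _ [seq e' <- Elist | e' != e]
   (fun e' => fapp e' d - fapp e d) (fun e' => N z - fapp e' z)
   (fun e' => ltac:(rewrite mem_filter => /andP [ne ein]; rewrite subr_gt0;
                    exact: lt _ (Elist_ext ein) ne)).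
pose e2 := N z / (`|fapp e d| + 1).
have e20 : 0 < e2 by rewrite divr_gt0 // ltr_wpDl.
exists (Num.min e1 e2); first by rewrite lt_min e10 e20.
move=> t t0 tle.
have te1 : t <= e1 by move: tle; rewrite le_min => /andP [].
have te2 : t <= e2 by move: tle; rewrite le_min => /andP [].
set w := z + t *: d.
have ew : fapp e w = N z + t * fapp e d by rewrite /w fappD fappZ ez.
have ew0 : 0 < fapp e w.
  rewrite ew; have : t * `|fapp e d| < N z.
    apply: le_lt_trans (ler_wpM2r (normr_ge0 _) te2) _.
    rewrite /e2 mulrAC ltr_pdivrMr ?ltr_wpDl // mulrDr mulr1 ltrDl //.
  have := ler_norm (- fapp e d); rewrite normrN => *; nra.
have wn : w != 0 by apply/negP => /eqP w0; move: ew0; rewrite w0 fapp0 ltxx.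
split => //; apply: J_unique => // e' ee' hw.
apply/eqP; apply/negP => /negP ne.
have ein : e' \in [seq e' <- Elist | e' != e] by rewrite mem_filter ne ext_Elist.
have h1 := He1 e' ein.
have h2 : t * (fapp e' d - fapp e d) <= e1 * `|fapp e' d - fapp e d|.
  apply: le_trans (ler_norm _) _; rewrite normrM (gtr0_norm t0).
  by apply: ler_wpM2r.
have : fapp e' w < fapp e w.
  rewrite ew /w fappD fappZ; lra.
by rewrite hw ltNge Pd_ext_le.
Qed.

Lemma J_generic w : w != 0 ->
  (forall e1 e2, e1 \in Elist -> e2 \in Elist -> e1 != e2 -> fapp e1 w != fapp e2 w) ->
  exists g, extreme Pd g /\ Jset N w = [set g].
Proof.
move=> wn H.
have [h0 /(Jset_Pd _ wn) [Ph0 hw0]] := Jne wn.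
have [e [ee ae]] := ext_attain Ph0.
have ew := ae w hw0.
exists e; split => //; apply: J_unique => // e' ee' hw.
apply/eqP; apply/negP => /negP ne.
by have := H _ _ (ext_Elist ee') (ext_Elist ee) ne; rewrite hw ew eqxx.
Qed.

Lemma tea_common x y a : (forall w, fapp a w <= N w) -> fapp a x = N x -> fapp a y = N y ->
  tea_pair N x y.
Proof.
move=> H hx hy; rewrite /tea_pair; apply/eqP; rewrite eq_le ND //=.
by have := H (x + y); rewrite fappD hx hy.
Qed.

Lemma common_tea x y : tea_pair N x y -> x + y != 0 ->
  exists a, [/\ forall w, fapp a w <= N w, fapp a x = N x & fapp a y = N y].
Proof.
move=> ht xyn; have [a /(Jset_Pd _ xyn) [Pa ha]] := Jne xyn.
have hx := Pd_le x Pa; have hy := Pd_le y Pa.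
move: ha; rewrite fappD ht => ha.
by exists a; split => //; [move=> w; exact: Pd_le | lra | lra].
Qed.

Lemma Sm_J e z : Sm N e z -> (forall w, fapp e w <= N w) /\ fapp e z = N z.
Proof.
move=> [zn Jz]; have : Jset N z e by rewrite Jz.
by move/(Jset_Pd _ zn) => [Pe ez]; split => // w; exact: Pd_le.
Qed.

Lemma Sm_convex e z z' s : Sm N e z -> Sm N e z' -> 0 <= s -> s <= 1 ->
  Sm N e ((1 - s) *: z + s *: z').
Proof.
move=> hz hz' s0 s1.
have [[zn Jz] [zn' Jz']] := (hz, hz').
have [He ez] := Sm_J hz; have [_ ez'] := Sm_J hz'.
have Nz := Ngt0 hN zn; have Nz' := Ngt0 hN zn'.
set w := (1 - s) *: z + s *: z'.
have ew : fapp e w = (1 - s) * N z + s * N z' by rewrite /w fappD !fappZ ez ez'.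
have Nw : N w <= (1 - s) * N z + s * N z'.
  apply: le_trans (ND hN _ _) _; rewrite !(NZ hN) !ger0_norm ?subr_ge0 //.
have ew' : fapp e w = N w by apply/eqP; rewrite eq_le He ew Nw.
have wn : w != 0.
  apply/negP => /eqP w0; move: ew; rewrite w0 fapp0 => h.
  have : 0 < (1 - s) * N z + s * N z' by nra.
  by rewrite -h ltxx.
split => //; apply/seteqP; split => h.
  move/(Jset_Pd _ wn) => [Ph hw] /=.
  have hz1 := Pd_le z Ph; have hz2 := Pd_le z' Ph.
  have Nw' : N w = (1 - s) * N z + s * N z' by rewrite -ew' ew.
  move: hw; rewrite Nw' /w fappD !fappZ => hw.
  have [s1'|s1'] := eqVneq s 1.
    have hz3 : fapp h z' = N z' by rewrite s1' in hw; lra.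
    have : Jset N z' h by apply/(Jset_Pd _ zn'); split.
    by rewrite Jz'.
  have s1'' : s < 1 by rewrite lt_neqAle s1' s1.
  have hz3 : fapp h z = N z by nra.
  have : Jset N z h by apply/(Jset_Pd _ zn); split.
  by rewrite Jz.
move=> /= ->; apply/(Jset_Pd _ wn); split => //.
have : Jset N z e by rewrite Jz.
by move/(Jset_Pd _ zn) => [].
Qed.

Lemma Sm_shift e z0 x s : Sm N e z0 -> fapp e x = N x -> 0 < s -> Sm N e (x + s *: z0).
Proof.
move=> hz0 ex s0; have [z0n Jz0] := hz0.
have [He ez0] := Sm_J hz0.
have Nz0 := Ngt0 hN z0n; have Nx := Nge0 hN x.
set w := x + s *: z0.
have ew : fapp e w = N x + s * N z0 by rewrite /w fappD fappZ ex ez0.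
have Nw : N w <= N x + s * N z0.
  by apply: le_trans (ND hN _ _) _; rewrite (NZ hN) ger0_norm // ltW.
have ew' : fapp e w = N w by apply/eqP; rewrite eq_le He ew Nw.
have Nw' : N w = N x + s * N z0 by rewrite -ew' ew.
have wn : w != 0.
  apply/negP => /eqP w0; move: ew; rewrite w0 fapp0 => h.
  have : 0 < N x + s * N z0 by nra.
  by rewrite -h ltxx.
split => //; apply/seteqP; split => h.
  move/(Jset_Pd _ wn) => [Ph hw] /=.
  have hz1 := Pd_le x Ph; have hz2 := Pd_le z0 Ph.
  move: hw; rewrite Nw' /w fappD fappZ => hw.
  have hz3 : fapp h z0 = N z0 by nra.
  have : Jset N z0 h by apply/(Jset_Pd _ z0n); split.
  by rewrite Jz0.
move=> /= ->; apply/(Jset_Pd _ wn); split => //.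
have : Jset N z0 e by rewrite Jz0.
by move/(Jset_Pd _ z0n) => [].
Qed.

Lemma limit_attain g a b : (forall w, fapp g w <= N w) ->
  (forall s, 0 < s -> fapp g (a + s *: b) = N (a + s *: b)) -> fapp g a = N a.
Proof.
move=> H Hs; apply/eqP; rewrite eq_le H /=.
apply/ler_addgt0Pr => eps eps0.
set c := N b + `|fapp g b| + 1.
have c0 : 0 < c by rewrite /c ltr_wpDl // addr_ge0 // Nge0.
set s := eps / c.
have s0 : 0 < s by rewrite divr_gt0.
have := Hs s s0; rewrite fappD fappZ => e1.
have h1 : N a <= N (a + s *: b) + s * N b.
  by have := NBs hN (a + s *: b) (s *: b); rewrite addrK (NZ hN) ger0_norm ?(ltW s0).
rewrite -e1 in h1.
have h2 : s * c = eps by rewrite /s divfK ?gt_eqF.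
have := ler_norm (fapp g b); have := ler_norm (- fapp g b); rewrite normrN => *.
rewrite /c in h2; nra.
Qed.

End Dual.

Lemma avoid (R : realType) (n : nat) (I : eqType) (U : set 'rV[R]_n) (s : seq I)
  (phi : I -> 'rV[R]_n -> R) z0 :
  U z0 ->
  (forall z d, U z -> exists2 t0, 0 < t0 & forall t, 0 < t -> t <= t0 -> U (z + t *: d)) ->
  (forall i, i \in s -> (forall a x y, phi i (a *: x + y) = a * phi i x + phi i y) /\
                        exists d, phi i d != 0) ->
  exists2 z, U z & forall i, i \in s -> phi i z != 0.
Proof.
move=> Uz0 rad; elim: s => [|a s IH] H; first by exists z0.
have H' : forall i, i \in s -> (forall a x y, phi i (a *: x + y) = a * phi i x + phi i y) /\
                        exists d, phi i d != 0.
  by move=> i iis; apply: H; rewrite inE iis orbT.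
have [z Uz Hz] := IH H'.
have [la [d da]] := H a (mem_head _ _).
have [az|az] := eqVneq (phi a z) 0; last first.
  by exists z => // i; rewrite inE => /orP [/eqP ->//|]; exact: Hz.
have [t0 t00 Ht0] := rad z d Uz.
have [ep ep0 Hep] := @small_eps _ _ s (fun i => phi i d) (fun i => `|phi i z|)
  (fun i iis => ltac:(by rewrite normr_gt0; exact: Hz)).
pose t := Num.min ep t0.
have t0' : 0 < t by rewrite lt_min ep0 t00.
have tt0 : t <= t0 by rewrite ge_min lexx orbT.
have tep : t <= ep by rewrite ge_min lexx.
exists (z + t *: d); first exact: Ht0.
have lin : forall i, (forall a x y, phi i (a *: x + y) = a * phi i x + phi i y) ->
   phi i (z + t *: d) = phi i z + t * phi i d.
  move=> i li; rewrite addrC li; have := li 1 0 0; rewrite scale1r !addr0 mul1r.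
  by move=> e; rewrite addrC.
move=> i; rewrite inE => /orP [/eqP ->|iis].
  rewrite (lin _ la) az add0r mulf_neq0 //; exact: lt0r_neq0.
have [li _] := H' i iis; rewrite (lin _ li).
have h1 := Hep i iis.
have h2 : t * `|phi i d| <= ep * `|phi i d| by apply: ler_wpM2r.
apply/negP => /eqP h0.
have : phi i z = - (t * phi i d) by apply/eqP; rewrite -addr_eq0 h0.
move=> e; move: h1; rewrite e normrN normrM (gtr0_norm t0'); lra.
Qed.

Section MainProof.
Variables (R : realType) (n m : nat) (NX : 'rV[R]_n -> R) (NY : 'rV[R]_m -> R).
Hypotheses (hNX : is_norm NX) (hNY : is_norm NY).
Variables (sX : seq 'rV[R]_n) (sY : seq 'rV[R]_m).
Hypotheses (hX : extreme (unit_ball NX) = [set` sX]) (hY : extreme (unit_ball NY) = [set` sY]).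
Variables (T : {linear 'rV[R]_n -> 'rV[R]_m}) (Ti : 'rV[R]_m -> 'rV[R]_n).
Hypotheses (TK : cancel T Ti) (TiK : cancel Ti T).

Definition TEAP := forall x y, tea_pair NX x y -> tea_pair NY (T x) (T y).
Definition PARP := forall x y, parallel_pair NX x y -> parallel_pair NY (T x) (T y).
Definition KEY := forall f, extreme (Pd sX) f ->
  exists g : 'cV[R]_m, (forall w, fapp g w <= NY w) /\
     forall z, Sm NX f z -> fapp g (T z) = NY (T z).

Lemma Tne z : z != 0 -> T z != 0.
Proof.
apply: contraNneq => h; by rewrite -(TK z) h -(linear0 T) TK.
Qed.

Lemma b_to_a : TEAP -> PARP.
Proof.
move=> Tp x y [l [hl e]].
have t : tea_pair NX x (l *: y) by rewrite /tea_pair e (NZ hNX) hl mul1r.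
have := Tp _ _ t; rewrite /tea_pair linearZ /= => e2.
by exists l; split => //; rewrite e2 (NZ hNY) hl mul1r.
Qed.

Lemma key_to_b : KEY -> TEAP.
Proof.
move=> K x y hxy.
have [xy0|xyn] := eqVneq (x + y) 0.
  have : NX x + NX y = 0 by rewrite -hxy xy0 (N0 hNX).
  have := Nge0 hNX x; have := Nge0 hNX y => h1 h2 h3.
  have x0 : x = 0 by apply: (N_eq0 hNX); lra.
  have y0 : y = 0 by apply: (N_eq0 hNX); lra.
  by rewrite /tea_pair x0 y0 linear0 addr0 (N0 hNY) addr0.
have n0 : (0 < n)%N.
  case: (posnP n) => // n0; exfalso; move/eqP: xyn; apply; apply/matrixP => i j.
  by have := ltn_ord j; rewrite [X in (_ < X)%N]n0.
have [a [Ha ax ay]] := common_tea hNX hX hxy xyn.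
have Pa : Pd sX a by rewrite -(dball_P hNX hX); apply/(dball hNX hX).
have [e [ee ae]] := ext_attain hNX hX Pa.
have [z0 hz0] := Sm_ne hNX hX n0 ee.
have [g [Hg Hgz]] := K e ee.
have tx : fapp g (T x) = NY (T x).
  apply: (limit_attain hNY (b := T z0) Hg) => s s0.
  by rewrite -linearZ -linearD; apply: Hgz; apply: (Sm_shift hNX hX hz0 (ae x ax) s0).
have ty : fapp g (T y) = NY (T y).
  apply: (limit_attain hNY (b := T z0) Hg) => s s0.
  by rewrite -linearZ -linearD; apply: Hgz; apply: (Sm_shift hNX hX hz0 (ae y ay) s0).
exact: (tea_common hNY Hg tx ty).
Qed.

Lemma c_to_key : (forall f, extreme (dual_unit_ball NX) f ->
      exists! g, extreme (dual_unit_ball NY) g /\ T @` Sm NX f `<=` Sm NY g) -> KEY.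
Proof.
move=> C f ef; have ef' : extreme (dual_unit_ball NX) f by rewrite (dball_P hNX hX).
have [g [[eg sub] _]] := C f ef'.
exists g; split.
  move=> w; apply: (Pd_ext_le hNY hY w); by rewrite -(dball_P hNY hY).
move=> z hz; have := sub (T z) (ex_intro2 _ _ z hz erefl).
by move/(Sm_J hNY hY) => [].
Qed.

Lemma a_to_key : (0 < n)%N -> PARP -> KEY.
Proof.
move=> n0 Pp f ef.
have [z1 hz1] := Sm_ne hNX hX n0 ef.
pose s := [seq p <- [seq (e1, e2) | e1 <- Elist sY, e2 <- Elist sY] | p.1 != p.2].
pose phi (p : 'cV[R]_m * 'cV[R]_m) z := fapp (p.1 - p.2) (T z).
have side : forall p, p \in s -> (forall a x y, phi p (a *: x + y) = a * phi p x + phi p y) /\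
                        exists d, phi p d != 0.
  move=> p; rewrite mem_filter => /andP [pn _]; split.
    by move=> a x y; rewrite /phi linearD linearZ fappD fappZ.
  apply: contrapT => H; move/eqP: pn; apply; apply/eqP; rewrite -subr_eq0; apply/eqP.
  apply: fapp_inj => y; rewrite fapp0f -(TiK y); apply/eqP; apply/negPn/negP => h.
  by apply: H; exists (Ti y).
have [zs hzs Hzs] := @avoid _ _ _ (Sm NX f) s phi z1 hz1
  (fun z d hz => Sm_radial hNX hX d ef hz) side.
have zsn : zs != 0 by case: hzs.
have Tzn := Tne zsn.
have side2 : forall e1 e2, e1 \in Elist sY -> e2 \in Elist sY -> e1 != e2 ->
    fapp e1 (T zs) != fapp e2 (T zs).
  move=> e1 e2 e1in e2in ne.
  have pin : (e1, e2) \in s by rewrite mem_filter /= ne (allpairs_f pair e1in e2in).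
  by have := Hzs _ pin; rewrite /phi fappBf subr_eq0.
have [g [eg Jg]] := J_generic hNY hY Tzn side2.
have gJ : Jset NY (T zs) g by rewrite Jg.
have [Pg gz] := (Jset_Pd hNY hY _ Tzn).1 gJ.
have Hg : forall w, fapp g w <= NY w by move=> w; apply: (Pd_le hNY hY); exact: Pg.
exists g; split => // z hz.
have absg : forall t, 0 <= t -> t <= 1 ->
   `|fapp g (T ((1 - t) *: zs + t *: z))| = NY (T ((1 - t) *: zs + t *: z)).
  move=> t t0 t1; set zt := (1 - t) *: zs + t *: z.
  have hzt : Sm NX f zt by apply: (Sm_convex hNX hX)...
  have par : parallel_pair NX zs zt.
    exists 1; split; first by rewrite normr1.
    have [Hf fzs] := Sm_J hNX hX hzs; have [_ fzt] := Sm_J hNX hX hzt.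
    by rewrite scale1r; exact: (tea_common hNX Hf fzs fzt).
  have [l [hl el]] := Pp _ _ par.
  have tl : tea_pair NY (T zs) (l *: T zt) by rewrite /tea_pair el (NZ hNY) hl mul1r.
  have ztn : zt != 0 by case: hzt.
  have nz : T zs + l *: T zt != 0.
    apply/negP => /eqP h0; move: el; rewrite h0 (N0 hNY) => h.
    have := Ngt0 hNY Tzn; have := Nge0 hNY (T zt); lra.
  have [a [Ha a1 a2]] := common_tea hNY hY tl nz.
  have Pa : Pd sY a by rewrite -(dball_P hNY hY); apply/(dball hNY hY).
  have : Jset NY (T zs) a by apply/(Jset_Pd hNY hY _ Tzn); split.
  rewrite Jg => /= ag; rewrite ag fappZ (NZ hNY) hl mul1r in a2.
  have pos : 0 <= l * fapp g (T zt) by rewrite a2; exact: Nge0.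
  by rewrite -a2 -(ger0_norm pos) normrM hl mul1r.
have e1 := absg 1 ler01 (lexx 1).
rewrite subrr scale0r add0r scale1r in e1.
have zn : z != 0 by case: hz.
have Tz := Tne zn.
have A0 := Ngt0 hNY Tzn; have B0 := Ngt0 hNY Tz.
apply/eqP; rewrite eq_le Hg /=; rewrite leNgt; apply/negP => neg.
have gneg : fapp g (T z) = - NY (T z).
  have [gpos|gneg'] := leP 0 (fapp g (T z)).
    by move: e1; rewrite ger0_norm // => h; move: neg; rewrite h ltxx.
  by move: e1; rewrite ltr0_norm // => <-; rewrite opprK.
set A := NY (T zs) in A0 gz; set B := NY (T z) in B0 gneg neg e1.
pose t0 := A / (A + B).
have t00 : 0 <= t0 by rewrite divr_ge0 // ltW // addr_gt0.
have t01 : t0 <= 1 by rewrite ler_pdivrMr ?addr_gt0 // mul1r lerDl ltW.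
have := absg t0 t00 t01.
rewrite linearD !linearZ fappD !fappZ gz gneg.
have -> : (1 - t0) * A + t0 * - B = 0.
  by rewrite /t0; field; rewrite gt_eqF // addr_gt0.
rewrite normr0 => /esym/(N_eq0 hNY) => h.
have : (1 - t0) *: zs + t0 *: z = 0.
  by apply/eqP; apply/negPn/negP => hn; have := Tne hn; rewrite linearD !linearZ /= h eqxx.
move=> h2; have : Sm NX f ((1 - t0) *: zs + t0 *: z) by apply: (Sm_convex hNX hX)...
by rewrite h2 => -[]; rewrite eqxx.
Qed.

Lemma b_to_c : (0 < n)%N -> TEAP -> forall f, extreme (dual_unit_ball NX) f ->
  exists! g, extreme (dual_unit_ball NY) g /\ T @` Sm NX f `<=` Sm NY g.
Proof.
move=> n0 Tp f; rewrite (dball_P hNX hX) => ef.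
have [z0 hz0] := Sm_ne hNX hX n0 ef.
have step1 : forall z z', Sm NX f z -> Sm NX f z' -> Jset NY (T z) `<=` Jset NY (T z').
  move=> z z' hz hz' h hh.
  have [t t0 Ht] := Sm_radial hNX hX (z - z') ef hz.
  have hw := Ht t t0 (lexx t); set w := z + t *: (z - z') in hw.
  have [Hf fw] := Sm_J hNX hX hw; have [_ fz'] := Sm_J hNX hX hz'.
  have tw := Tp _ _ (tea_common hNX Hf fw fz').
  have wn : w != 0 by case: hw.
  have zn' : z' != 0 by case: hz'.
  have zn : z != 0 by case: hz.
  have wz'n : T w + T z' != 0.
    rewrite -linearD; apply: Tne; apply/negP => /eqP h0.
    have := Ngt0 hNX wn; have := Ngt0 hNX zn'; have := Hf (w + z').
    by rewrite fappD fw fz' h0 (N0 hNX); lra.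
  have [a [Ha aw az']] := common_tea hNY hY tw wz'n.
  have Tzn := Tne zn; have Tzn' := Tne zn'.
  move/(Jset_Pd hNY hY _ Tzn): hh => [Ph hz1].
  apply/(Jset_Pd hNY hY _ Tzn'); split => //.
  have eTw : T w = T z + t *: (T z - T z') by rewrite /w linearD linearZ linearB.
  have hw1 := Pd_le hNY hY (T w) Ph; have hz2 := Pd_le hNY hY (T z') Ph.
  have az := Ha (T z).
  have ev : (1 + t) *: T z = T w + t *: T z'.
    by rewrite eTw; apply/matrixP => i j; rewrite !mxE; ring.
  have f1 : (1 + t) * NY (T z) <= NY (T w) + t * NY (T z').
    have t0' : 0 <= t := ltW t0.
    have t1' : 0 <= 1 + t by lra.
    by have := ND hNY (T w) (t *: T z'); rewrite -ev !(NZ hNY) !ger0_norm.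
  move: aw hw1 hz1; rewrite eTw !fappD !fappZ !fappB => aw hw1 hz1.
  have ez : NY (T z + t *: (T z - T z')) = NY (T w) by rewrite eTw.
  rewrite ez in aw hw1.
  nra.
have z0n : z0 != 0 by case: hz0.
have Tz0n := Tne z0n.
have [g Jg0] := Jne hNY hY Tz0n.
have Jsing : Jset NY (T z0) = [set g].
  apply/seteqP; split => h; last by move=> /= ->.
  move=> hh /=; apply: fapp_inj => y.
  have [t t0 Ht] := Sm_radial hNX hX (Ti y) ef hz0.
  have hw := Ht t t0 (lexx t).
  have h1 := step1 _ _ hz0 hw _ hh; have g1 := step1 _ _ hz0 hw _ Jg0.
  have wn : z0 + t *: Ti y != 0 by case: hw.
  have Tn := Tne wn.
  move/(Jset_Pd hNY hY _ Tn): h1 => [_ e1]; move/(Jset_Pd hNY hY _ Tn): g1 => [_ e2].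
  move/(Jset_Pd hNY hY _ Tz0n): hh => [_ e3]; move/(Jset_Pd hNY hY _ Tz0n): Jg0 => [_ e4].
  move: e1 e2; rewrite linearD linearZ /= TiK !fappD !fappZ e3 e4 => e1 e2.
  have : t * (fapp h y - fapp g y) = 0 by rewrite mulrBr; lra.
  by move/eqP; rewrite mulf_eq0 gt_eqF //= subr_eq0 => /eqP.
have [Pg gz0] := (Jset_Pd hNY hY _ Tz0n).1 Jg0.
exists g; split.
  split.
    rewrite (dball_P hNY hY); split => // a b t Pa Pb /andP [ta tb] eg.
    have a1 := Pd_le hNY hY (T z0) Pa; have b1 := Pd_le hNY hY (T z0) Pb.
    have e := gz0; rewrite eg fappDf !fappZf in e.
    have ea : fapp a (T z0) = NY (T z0) by nra.
    have eb : fapp b (T z0) = NY (T z0) by nra.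
    have : Jset NY (T z0) a by apply/(Jset_Pd hNY hY _ Tz0n); split.
    have : Jset NY (T z0) b by apply/(Jset_Pd hNY hY _ Tz0n); split.
    by rewrite Jsing /= => -> ->.
  move=> _ [z hz <-]; have zn : z != 0 by case: hz.
  split; first exact: Tne.
  apply/seteqP; split => h.
    by move=> hh; rewrite -Jsing; exact: step1 hz hz0 _ hh.
  move=> /= ->; apply: step1 hz0 hz _ _; by rewrite Jsing.
move=> g' [_ sub]; have := sub (T z0) (ex_intro2 _ _ z0 hz0 erefl).
move=> [_ Jg']; have : Jset NY (T z0) g by rewrite Jsing.
by rewrite Jg'.
Qed.

End MainProof.


Unset Implicit Arguments. Set Strict Implicit. Set Printing Implicit Defensive.

Theorem mainTheorem15 (R : realType) (n m : nat)
  (NX : 'rV[R]_n -> R) (NY : 'rV[R]_m -> R)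
  (hNX : is_norm NX) (hNY : is_norm NY)
  (pX : polyhedral NX) (pY : polyhedral NY)
  (T : {linear 'rV[R]_n -> 'rV[R]_m}) (hT : bijective T) :
  ((forall x y, parallel_pair NX x y -> parallel_pair NY (T x) (T y)) <->
   (forall x y, tea_pair NX x y -> tea_pair NY (T x) (T y))) /\
  ((forall x y, tea_pair NX x y -> tea_pair NY (T x) (T y)) <->
   (forall f, extreme (dual_unit_ball NX) f ->
      exists! g, extreme (dual_unit_ball NY) g /\ T @` Sm NX f `<=` Sm NY g)).
Proof.
have [sX hX] := (finite_seqP _).1 pX.
have [sY hY] := (finite_seqP _).1 pY.
have [Ti TK TiK] := hT.
case: (posnP n) => [n0|n0].
  have allX0 : forall x : 'rV[R]_n, x = 0.
    move=> x; apply/matrixP => i j; by have := ltn_ord j; rewrite [X in (_ < X)%N]n0.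
  have allY0 : forall y : 'rV[R]_m, y = 0.
    by move=> y; rewrite -(TiK y) (allX0 (Ti y)) linear0.
  have allC0 : forall h : 'cV[R]_m, h = 0.
    by move=> h; apply: fapp_inj => y; rewrite (allY0 y) fapp0 fapp0f.
  have teaY : forall x y, tea_pair NY (T x) (T y).
    by move=> x y; rewrite /tea_pair (allY0 (T x)) (allY0 (T y)) addr0 (N0 hNY) addr0.
  split; split.
  - by move=> _ x y _; exact: teaY.
  - move=> _ x y _; exists 1; split; first by rewrite normr1.
    by rewrite (allY0 (T x)) (allY0 (T y)) scaler0 addr0 (N0 hNY) addr0.
  - move=> _ f _; exists 0; split.
      split.
        rewrite (dball_P hNY hY); split; first by move=> v _; rewrite fapp0f ler01.
        by move=> a b t _ _ _ _; rewrite (allC0 a) (allC0 b).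
      by move=> y [z [zn _] _]; move: zn; rewrite (allX0 z) eqxx.
    by move=> g' _; rewrite (allC0 g').
  - by move=> _ x y _; exact: teaY.
split; split.
- move=> Pp; apply: (key_to_b hNX hNY hX); exact: (a_to_key hNX hNY hX hY TK TiK n0 Pp).
- exact: (b_to_a hNX hNY).
- move=> Tp; exact: (b_to_c hNX hNY hX hY TK TiK n0 Tp).
- move=> C; apply: (key_to_b hNX hNY hX); exact: (c_to_key hNX hNY hX hY C).
Qed.
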